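(* Let $I=[a,b]\subset\mathbb R$ with $a<b$, and let $f:I\to I$ be a continuous increasing function such that $f(a)=a$, $f(b)=b$ and $f(x)\neq x$ for all $x\in\,]a,b[$. Then ${\rm h_{pol}}(f)=1$.
   Context: $I$ carries the usual metric $d(x,y)=|x-y|$. Polynomial entropy: with $d_n^f(x,y)=\max_{0\le k\le n-1}d(f^k(x),f^k(y))$ and $G_n^f(\varepsilon)$ the minimal number of $d_n^f$-balls of radius $\varepsilon$ covering $I$, ${\rm h_{pol}}(f)=\lim_{\varepsilon\to0}\limsup_{n\to\infty}\frac{\log G_n^f(\varepsilon)}{\log n}$. *)

(* Defs.v *)
From HB Require Import structures.
From mathcomp Require Import all_boot all_order all_algebra.
From mathcomp Require Import all_classical all_reals all_analysis.
Set Implicit Arguments. Unset Strict Implicit. Unset Printing Implicit Defensive.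
Import Order.TTheory GRing.Theory Num.Theory.
Import numFieldNormedType.Exports.
Local Open Scope classical_set_scope.
Local Open Scope ring_scope.

Definition dn (R : realType) (f : R -> R) (n : nat) (x y : R) : R :=
  \big[Num.max/0]_(k < n) `|iter k f x - iter k f y|.

Definition covers (R : realType) (f : R -> R) (a b : R) (n : nat) (eps : R)
    (m : nat) : Prop :=
  exists s : seq R, size s = m /\ all (fun x => x \in `[a, b]) s /\
    forall y, y \in `[a, b] -> has (fun x => dn f n x y < eps) s.

Definition Gn (R : realType) (f : R -> R) (a b : R) (n : nat) (eps : R) : R :=
  inf [set (m%:R : R) | m in covers f a b n eps].

Definition hpol_eps (R : realType) (f : R -> R) (a b : R) (eps : R) : \bar R :=
  limn_esup (fun n : nat => (ln (Gn f a b n eps) / ln (n%:R))%:E).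

(* Main.v *)
Require Import Defs.
From HB Require Import structures.
From mathcomp Require Import all_boot all_order all_algebra.
From mathcomp Require Import all_classical all_reals all_analysis.
From mathcomp Require Import lra.
Import Order.TTheory GRing.Theory Num.Theory.
Import numFieldNormedType.Exports.
Local Open Scope classical_set_scope.
Local Open Scope ring_scope.
Set Implicit Arguments. Unset Strict Implicit.

Lemma itr_in (R : realType) (a b : R) (f : R -> R) :
  (forall x, x \in `[a, b] -> f x \in `[a, b]) ->
  forall k x, x \in `[a, b] -> iter k f x \in `[a, b].
Proof. by move=> H; elim=> [|k IH] x Hx //=; apply/H/IH. Qed.

Lemma itr_le (R : realType) (a b : R) (f : R -> R) :
  (forall x, x \in `[a, b] -> f x \in `[a, b]) ->
  {in `[a, b] &, {homo f : x y / x < y}} ->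
  forall k x y, x \in `[a, b] -> y \in `[a, b] -> x <= y ->
  iter k f x <= iter k f y.
Proof.
move=> H Hm; elim=> [|k IH] x y Hx Hy xy //=.
have := IH x y Hx Hy xy; rewrite le_eqVlt => /orP[/eqP->//|lt].
by apply/ltW/Hm => //; apply: itr_in.
Qed.

Lemma itr_fix (T : Type) (f : T -> T) a : f a = a -> forall k, iter k f a = a.
Proof. by move=> fa; elim=> //= k ->. Qed.

Lemma itr_up (R : realType) (a b : R) (f : R -> R) :
  (forall x, x \in `[a, b] -> f x \in `[a, b]) ->
  (forall x, x \in `[a, b] -> x <= f x) ->
  forall x k l, x \in `[a, b] -> (k <= l)%N -> iter k f x <= iter l f x.
Proof.
move=> H Hu x k l Hx /subnK <-; elim: (l - k)%N => [|m IH] /=; first exact: lexx.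
by apply: le_trans IH _; apply: Hu; apply: itr_in.
Qed.

Lemma in_ab (R : realType) (a b x : R) : x \in `[a, b] -> a <= x /\ x <= b.
Proof. by rewrite in_itv /= => /andP. Qed.

Lemma norm_le_norm (R : realType) (u v : R) : u <= `|v| -> - u <= `|v| -> `|u| <= `|v|.
Proof. by move=> h1 h2; rewrite ler_norml; apply/andP; split; lra. Qed.


Definition phi (R : realType) (f : R -> R) (N : nat) (z : R) : R :=
  \sum_(m < N) iter m f z.

Lemma phi_diff (R : realType) (a b : R) (f : R -> R) N :
  (forall x, x \in `[a, b] -> f x \in `[a, b]) ->
  {in `[a, b] &, {homo f : x y / x < y}} ->
  forall z z' m, z \in `[a, b] -> z' \in `[a, b] -> z <= z' -> (m < N)%N ->
  iter m f z' - iter m f z <= phi f N z' - phi f N z.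
Proof.
move=> H Hm z z' m Hz Hz' zz' mN.
rewrite /phi -sumrB (bigD1 (Ordinal mN)) //= lerDl.
by apply: sumr_ge0 => i _; rewrite subr_ge0; apply: (itr_le H Hm).
Qed.

Lemma phi_mono (R : realType) (a b : R) (f : R -> R) N :
  (forall x, x \in `[a, b] -> f x \in `[a, b]) ->
  {in `[a, b] &, {homo f : x y / x < y}} ->
  forall z z', z \in `[a, b] -> z' \in `[a, b] -> z <= z' ->
  phi f N z <= phi f N z'.
Proof.
move=> H Hm z z' Hz Hz' zz'.
rewrite -subr_ge0 /phi -sumrB; apply: sumr_ge0 => i _.
by rewrite subr_ge0; apply: (itr_le H Hm).
Qed.

Lemma phi_norm (R : realType) (a b : R) (f : R -> R) N :
  (forall x, x \in `[a, b] -> f x \in `[a, b]) ->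
  {in `[a, b] &, {homo f : x y / x < y}} ->
  forall z z' m, z \in `[a, b] -> z' \in `[a, b] -> (m < N)%N ->
  `|iter m f z - iter m f z'| <= `|phi f N z - phi f N z'|.
Proof.
move=> H Hm z z' m Hz Hz' mN.
have n1 := ler_norm (phi f N z - phi f N z').
have n2 := ler_norm (- (phi f N z - phi f N z')); rewrite normrN in n2.
case/orP: (le_total z z') => zz'.
  have h1 := phi_diff H Hm Hz Hz' zz' mN.
  have h2 := itr_le H Hm m Hz Hz' zz'.
  by apply: norm_le_norm; lra.
have h1 := phi_diff H Hm Hz' Hz zz' mN.
have h2 := itr_le H Hm m Hz' Hz zz'.
by apply: norm_le_norm; lra.
Qed.

Lemma trunc_close (R : realType) (d u v c : R) : 0 < d -> c <= u -> c <= v ->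
  Num.truncn ((u - c) / d) = Num.truncn ((v - c) / d) -> `|u - v| < d.
Proof.
move=> d0; rewrite -subr_ge0 => u0; rewrite -subr_ge0 => v0 E.
have hu := truncn_itv (divr_ge0 u0 (ltW d0)).
have hv := truncn_itv (divr_ge0 v0 (ltW d0)).
rewrite E in hu.
move: hu hv => /andP[hu1 hu2] /andP[hv1 hv2].
move: hu1 hu2 hv1 hv2; set t := Num.truncn ((v - c) / d) => hu1 hu2 hv1 hv2.
rewrite ler_pdivlMr // in hu1; rewrite ler_pdivlMr // in hv1.
rewrite ltr_pdivrMr // in hu2; rewrite ltr_pdivrMr // in hv2.
rewrite -natr1 mulrDl mul1r in hu2; rewrite -natr1 mulrDl mul1r in hv2.
by rewrite ltr_norml; apply/andP; split; lra.
Qed.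

Lemma find_before (R : realType) (f : R -> R) (p y : R) n k :
  (k < find (fun k => (p <= iter k f y)%R) (iota 0 n))%N -> (k < n)%N ->
  iter k f y < p.
Proof.
move=> hk hn; have := before_find 0%N hk; rewrite nth_iota // add0n => h.
by rewrite ltNge h.
Qed.

Lemma find_at (R : realType) (f : R -> R) (p y : R) n :
  (find (fun k => (p <= iter k f y)%R) (iota 0 n) < n)%N ->
  p <= iter (find (fun k => (p <= iter k f y)%R) (iota 0 n)) f y.
Proof.
move=> h.
have hh : has (fun k => (p <= iter k f y)%R) (iota 0 n) by rewrite has_find size_iota.
by have := nth_find 0%N hh; rewrite nth_iota // add0n.
Qed.


Lemma upper_cover (R : realType) (a b : R) (f : R -> R) (eps p q : R) (N : nat) :
  (forall x, x \in `[a, b] -> f x \in `[a, b]) ->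
  {in `[a, b] &, {homo f : x y / x < y}} ->
  f a = a ->
  (forall x, x \in `[a, b] -> x <= f x) ->
  0 < eps -> p \in `[a, b] -> p - a < eps -> b - q < eps -> q <= iter N f p ->
  exists K : nat, forall n, covers f a b n eps (1 + n * K)%N.
Proof.
move=> H Hm fa Hu e0 pI pa bq qN.
have [ap pb] := in_ab pI.
have aI : a \in `[a, b] by rewrite in_itv /= lexx /=; apply: le_trans pb.
have bI : b \in `[a, b] by rewrite in_itv /= lexx andbT; apply: le_trans pb.
pose d := eps / 2.
have d0 : 0 < d by rewrite divr_gt0.
pose ph := phi f N.
pose K := Num.truncn ((ph b - ph p) / d).
exists K.+1 => n.
pose J y := find (fun k => p <= iter k f y) (iota 0 n).
pose Iy y := Num.truncn ((ph (iter (J y) f y) - ph p) / d).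
pose P j i := [set y | y \in `[a, b] /\ J y = j /\ Iy y = i].
pose rep j i := xget a (P j i).
have close : forall y y', y \in `[a,b] -> y' \in `[a,b] -> J y = J y' ->
    (J y < n)%N -> Iy y = Iy y' ->
    forall k, (k < n)%N -> `|iter k f y - iter k f y'| < eps.
  move=> y y' yI y'I Jeq Jn Ieq k kn.
  case: (ltnP k (J y)) => kJ.
    have h1 : iter k f y < p by apply: find_before kJ kn.
    have h2 : iter k f y' < p by apply: find_before kn; rewrite -/(J y') -Jeq.
    have [h3 _] := in_ab (itr_in H k yI); have [h4 _] := in_ab (itr_in H k y'I).
    by rewrite ltr_norml; apply/andP; split; lra.
  have -> : k = (k - J y + J y)%N by rewrite subnK.
  rewrite !iterD.
  have zI := itr_in H (J y) yI; have z'I := itr_in H (J y) y'I.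
  have pz : p <= iter (J y) f y by apply: find_at.
  have pz' : p <= iter (J y) f y' by rewrite Jeq; apply: find_at; rewrite -/(J y') -Jeq.
  case: (ltnP (k - J y) N) => mN.
    apply: le_lt_trans (phi_norm H Hm zI z'I mN) _.
    apply: (@lt_trans _ _ d); last by rewrite /d; lra.
    apply: (@trunc_close _ d _ _ (ph p)) => //.
    - by rewrite /ph; apply: (phi_mono N H Hm).
    - by rewrite /ph; apply: (phi_mono N H Hm).
    - by move: Ieq; rewrite /Iy -Jeq.
  have hz : q <= iter (k - J y) f (iter (J y) f y).
    apply: le_trans qN (le_trans (itr_up H Hu pI mN) _).
    exact: (itr_le H Hm).
  have hz' : q <= iter (k - J y) f (iter (J y) f y').
    apply: le_trans qN (le_trans (itr_up H Hu pI mN) _).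
    exact: (itr_le H Hm).
  have [_ h3] := in_ab (itr_in H (k - J y) zI).
  have [_ h4] := in_ab (itr_in H (k - J y) z'I).
  by rewrite ltr_norml; apply/andP; split; lra.
exists (a :: [seq rep j i | j <- iota 0 n, i <- iota 0 K.+1]).
split; first by rewrite -cat1s size_cat size_allpairs !size_iota.
split.
  apply/allP => x; rewrite inE => /orP[/eqP->//|/allpairsP[[j i] [_ _ ->]]].
  by rewrite /rep; case: xgetP => [y _ [Hy _]|_].
move=> y yI; apply/hasP.
case: (ltnP (J y) n) => Jn.
  have Prep : P (J y) (Iy y) (rep (J y) (Iy y)) by apply: (@xgetI _ a _ y).
  case: Prep => rI [rJ rIy].
  exists (rep (J y) (Iy y)).
    rewrite inE; apply/orP; right; apply: allpairs_f; rewrite mem_iota //=.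
    rewrite add0n ltnS; apply: le_truncn.
    rewrite ler_pM2r ?invr_gt0 // lerD2r.
    apply: (phi_mono N H Hm) => //; first exact: itr_in.
    by have [] := in_ab (itr_in H (J y) yI).
  rewrite /dn; apply: bigmax_lt => // k _; apply: close => //; by rewrite ?rJ ?rIy.
exists a; first by rewrite inE eqxx.
rewrite /dn; apply: bigmax_lt => // k _.
rewrite itr_fix //.
have h1 : iter k f y < p := find_before (leq_trans (ltn_ord k) Jn) (ltn_ord k).
have [h2 _] := in_ab (itr_in H k yI).
by rewrite ltr_norml; apply/andP; split; lra.
Qed.


Lemma lower_cover (R : realType) (a b : R) (f : R -> R) (c eps : R) n m :
  (forall x, x \in `[a, b] -> f x \in `[a, b]) ->
  {in `[a, b] &, {homo f : x y / x < y}} ->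
  (forall x, x \in `[a, b] -> x <= f x) ->
  (forall y, y \in `[a, b] -> exists2 x, x \in `[a, b] & f x = y) ->
  c \in `[a, b] -> 2 * eps <= f c - c ->
  covers f a b n eps m -> (n <= m)%N.
Proof.
move=> H Hm Hu Hs cI ce [s [sz [sI scov]]].
pose pre y := xget a [set x | x \in `[a, b] /\ f x = y].
have preP : forall y, y \in `[a, b] -> pre y \in `[a, b] /\ f (pre y) = y.
  move=> y yI; have [x xI fx] := Hs y yI.
  exact: (@xgetI _ a [set x | x \in `[a, b] /\ f x = y] x (conj xI fx)).
pose xs j := iter j pre c.
have xsI : forall j, xs j \in `[a, b].
  by elim=> [|j IH] //=; exact: (preP _ IH).1.
have xsc : forall j, iter j f (xs j) = c.
  elim=> [//|j IH].
  have -> : xs j.+1 = pre (xs j) by [].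
  by rewrite iterSr (preP _ (xsI j)).2 IH.
have sep : forall i j, (i < j)%N -> 2 * eps <= iter j f (xs i) - iter j f (xs j).
  move=> i j ij.
  have e : iter j f (xs i) = iter (j - i) f c.
    by rewrite -[in LHS](subnK (ltnW ij)) iterD xsc.
  rewrite e xsc; apply: le_trans ce _; rewrite lerD2r.
  by apply: (@itr_up _ _ _ _ H Hu c 1%N (j - i) cI); rewrite subn_gt0.
pose idx j := find (fun x => dn f n x (xs j) < eps) s.
have idxP : forall j, dn f n (nth 0 s (idx j)) (xs j) < eps.
  by move=> j; exact: (nth_find 0 (scov _ (xsI j))).
have idxs : forall j, (idx j < m)%N.
  by move=> j; rewrite -sz -has_find; apply: scov.
have neq : forall i j, (i < j)%N -> (j < n)%N -> idx i <> idx j.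
  move=> i j ij jn E.
  have h1 := idxP i; have h2 := idxP j; rewrite -E in h2.
  set x := nth 0 s (idx i) in h1 h2.
  have t1 : `|iter j f x - iter j f (xs i)| <= dn f n x (xs i).
    exact: (@le_bigmax _ _ _ 0 (fun k : 'I_n => `|iter k f x - iter k f (xs i)|) (Ordinal jn)).
  have t2 : `|iter j f x - iter j f (xs j)| <= dn f n x (xs j).
    exact: (@le_bigmax _ _ _ 0 (fun k : 'I_n => `|iter k f x - iter k f (xs j)|) (Ordinal jn)).
  have n1 := ler_norm (- (iter j f x - iter j f (xs i))); rewrite normrN in n1.
  have n2 := ler_norm (iter j f x - iter j f (xs j)).
  have := sep i j ij; lra.
have U : uniq (map idx (iota 0 n)).
  rewrite map_inj_in_uniq ?iota_uniq // => i j; rewrite !mem_iota !add0n /= => iin jn E.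
  case: (ltngtP i j) => // ij.
  - by case: (neq i j ij jn E).
  - by case: (neq j i ij iin (esym E)).
have := uniq_leq_size U (_ : {subset map idx (iota 0 n) <= iota 0 m}).
rewrite size_map !size_iota; apply.
by move=> x /mapP[j _ ->]; rewrite mem_iota add0n /=.
Qed.


Lemma Gn_bounds (R : realType) (a b : R) (f : R -> R) (eps : R) n M :
  covers f a b n eps M -> (forall m, covers f a b n eps m -> (n <= m)%N) ->
  n%:R <= Gn f a b n eps <= M%:R.
Proof.
move=> cM low; apply/andP; split.
  apply: lb_le_inf; first by exists M%:R; exists M.
  by move=> _ [m cm <-]; rewrite ler_nat; apply: low.
apply: (ge_inf (E := [set (m%:R : R) | m in covers f a b n eps])).
  by exists 0 => _ [m _ <-]; rewrite ler0n.
by exists M.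
Qed.

Lemma hpol_limit (R : realType) (a b : R) (f : R -> R) (eps : R) (K : nat) :
  (forall n, covers f a b n eps (1 + n * K)%N) ->
  (forall n m, covers f a b n eps m -> (n <= m)%N) ->
  hpol_eps f a b eps = 1%:E.
Proof.
move=> up low.
pose v n := ln (Gn f a b n eps) / ln (n%:R : R).
pose C : R := K.+1%:R.
have C1 : 1 <= C by rewrite ler1n.
have bnd : forall n, (2 <= n)%N -> 1 <= v n <= 1 + ln C / ln (n%:R : R).
  move=> n n2.
  have /andP[g1 g2] := Gn_bounds (up n) (low n).
  have n1 : 1 < (n%:R : R) by rewrite ltr1n.
  have ln0 : 0 < ln (n%:R : R) by apply: ln_gt0.
  have n0 : 0 < (n%:R : R) by lra.
  have G0 : 0 < Gn f a b n eps by lra.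
  have C0 : 0 < C by lra.
  have g3 : Gn f a b n eps <= n%:R * C.
    apply: le_trans g2 _; rewrite /C -natrM ler_nat.
    by rewrite mulnS leq_add2r; by apply: leq_trans n2.
  apply/andP; split.
    rewrite /v ler_pdivlMr // mul1r ler_ln ?posrE //.
  rewrite /v ler_pdivrMr // mulrDl mul1r divfK ?gt_eqF //.
  rewrite -lnM ?posrE // ler_ln ?posrE //; last by apply: mulr_gt0.
have cv : v n @[n --> \oo] --> (1 : R).
  apply/cvgrPdist_le => e e0.
  near=> n.
  have n2 : (2 <= n)%N by near: n; exact: nbhs_infty_ge.
  have ne : expR (ln C / e) <= (n%:R : R) by near: n; exact: nbhs_infty_ger.
  have /andP[b1 b2] := bnd n n2.
  have n1 : 1 < (n%:R : R) by rewrite ltr1n.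
  have ln0 : 0 < ln (n%:R : R) by apply: ln_gt0.
  have h : ln C / e <= ln (n%:R : R).
    have n0 : 0 < (n%:R : R) by lra.
    by move: ne; rewrite -ler_ln ?posrE ?expR_gt0 // expRK.
  have h2 : ln C / ln (n%:R : R) <= e.
    by rewrite ler_pdivrMr // mulrC -ler_pdivrMr.
  rewrite ler_norml; apply/andP; split; lra.
have cvE : (fun n => (v n)%:E) @ \oo --> (1%:E : \bar R).
  by apply: cvg_EFin => //; apply: nearW.
by rewrite /hpol_eps (cvg_limn_einf_sup cvE).2.
Unshelve. all: by end_near.
Qed.


Lemma orbit_reach (R : realType) (a b : R) (f : R -> R) p q :
  (forall x, x \in `[a, b] -> f x \in `[a, b]) ->
  (forall x, x \in `[a, b] -> x <= f x) ->
  p \in `[a, b] ->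
  (exists2 d, 0 < d & forall x, x \in `[p, q] -> d <= f x - x) ->
  exists N, q <= iter N f p.
Proof.
move=> H Hu pI [d d0 Hd].
case: (pselect (exists N, q <= iter N f p)) => // hn.
have lt : forall N, iter N f p < q.
  by move=> N; rewrite ltNge; apply/negP => h; apply: hn; exists N.
have grow : forall N, p + N%:R * d <= iter N f p.
  elim=> [|N IH]; first by rewrite mul0r addr0.
  have h1 : p <= iter N f p := @itr_up _ _ _ _ H Hu p 0%N N pI (leq0n N).
  have h2 : iter N f p \in `[p, q] by rewrite in_itv /= h1 /= ltW.
  have := Hd _ h2; rewrite -natr1 mulrDl mul1r /=; lra.
have pq : p < q by have := lt 0%N.
have x0 : 0 <= (q - p) / d by apply: divr_ge0; lra.
have := truncn_itv x0; set t := Num.truncn _ => /andP[_].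
rewrite ltr_pdivrMr // => ht.
have := grow t.+1; have := lt t.+1; lra.
Qed.

Lemma core_inc (R : realType) (a b : R) (f : R -> R) :
  a < b ->
  (forall x, x \in `[a, b] -> f x \in `[a, b]) ->
  {in `[a, b] &, {homo f : x y / x < y}} ->
  f a = a ->
  (forall x, x \in `[a, b] -> x <= f x) ->
  (forall y, y \in `[a, b] -> exists2 x, x \in `[a, b] & f x = y) ->
  (forall p q, a < p -> q < b -> exists2 d, 0 < d &
     forall x, x \in `[p, q] -> d <= f x - x) ->
  hpol_eps f a b eps @[eps --> 0^'+] --> (1%:E : \bar R).
Proof.
move=> ab H Hm fa Hu Hs Hgap.
pose c := (a + b) / 2.
have cI : c \in `[a, b] by rewrite in_itv /= /c; apply/andP; split; lra.
have [d0 d0p Hd0] := Hgap c c (ltac:(rewrite /c; lra)) (ltac:(rewrite /c; lra)).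
have cfc : d0 <= f c - c by apply: Hd0; rewrite in_itv /= lexx.
have [fa' fb'] := in_ab (H c cI).
have [ca cb] := in_ab cI.
apply: cvg_near_cst.
near=> eps.
have he0 : 0 < eps by near: eps; exact: nbhs_right_gt.
have he1 : eps < (f c - c) / 2.
  by near: eps; apply: nbhs_right_lt; rewrite divr_gt0 // (lt_le_trans d0p cfc).
pose p := a + eps / 2.
have pI : p \in `[a, b] by rewrite in_itv /= /p; apply/andP; split; lra.
pose q := b - eps / 2.
have [N qN] := orbit_reach H Hu pI (Hgap p q (ltac:(rewrite /p; lra)) (ltac:(rewrite /q; lra))).
have pa : p - a < eps by rewrite /p; lra.
have bq : b - q < eps by rewrite /q; lra.
have [K HK] := upper_cover H Hm fa Hu he0 pI pa bq qN.
apply: (hpol_limit HK) => n m; apply: (lower_cover H Hm Hu Hs cI); lra.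
Unshelve. all: by end_near.
Qed.


Lemma cont_sub (R : realType) (a b x1 x2 : R) (f : R -> R) :
  {within `[a, b], continuous f} -> a <= x1 -> x2 <= b ->
  {within `[x1, x2], continuous (fun x => f x - x)}.
Proof.
move=> fc ax bx.
have fc' : {within `[x1, x2], continuous f}.
  apply: (continuous_subspaceW _ fc) => x /=; rewrite !in_itv /= => /andP[h1 h2].
  by apply/andP; split; lra.
have idc : {within `[x1, x2], continuous (@id R)}.
  by apply: continuous_subspaceT => y; exact: cvg_id.
move=> x; apply: continuousB; first exact: fc'.
exact: idc.
Qed.

Lemma cont_sub2 (R : realType) (a b x1 x2 : R) (f : R -> R) :
  {within `[a, b], continuous f} -> a <= x1 -> x2 <= b ->
  {within `[x1, x2], continuous (fun x => x - f x)}.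
Proof.
move=> fc ax bx.
have fc' : {within `[x1, x2], continuous f}.
  apply: (continuous_subspaceW _ fc) => x /=; rewrite !in_itv /= => /andP[h1 h2].
  by apply/andP; split; lra.
have idc : {within `[x1, x2], continuous (@id R)}.
  by apply: continuous_subspaceT => y; exact: cvg_id.
move=> x; apply: continuousB; first exact: idc.
exact: fc'.
Qed.

Lemma pos_min (R : realType) (h : R -> R) p q :
  {within `[p, q], continuous h} -> (forall x, x \in `[p, q] -> 0 < h x) ->
  exists2 d, 0 < d & forall x, x \in `[p, q] -> d <= h x.
Proof.
move=> hc hp; case: (leP p q) => pq.
  have [c cI cmin] := EVT_min pq hc.
  by exists (h c); [exact: hp | exact: cmin].
by exists 1 => // x; rewrite in_itv /= => /andP[h1 h2]; lra.
Qed.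

Lemma no_fix_between (R : realType) (a b : R) (f : R -> R) x1 x2 :
  {within `[a, b], continuous f} -> (forall x, x \in `]a, b[ -> f x != x) ->
  x1 \in `]a, b[ -> x2 \in `]a, b[ -> x1 <= x2 ->
  Num.min (f x1 - x1) (f x2 - x2) <= 0 <= Num.max (f x1 - x1) (f x2 - x2) -> False.
Proof.
move=> fc nf x1I x2I x12 mm.
move: x1I x2I; rewrite !in_itv /= => /andP[ax1 x1b] /andP[ax2 x2b].
have [c cI gc] := IVT x12 (cont_sub fc (ltW ax1) (ltW x2b)) mm.
move: cI; rewrite in_itv /= => /andP[c1 c2].
have cI' : c \in `]a, b[ by rewrite in_itv /=; apply/andP; split; lra.
have fcc : f c = c by move: gc => /= gc; lra.
by move: (nf c cI'); rewrite fcc eqxx.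
Qed.

Lemma sign_const (R : realType) (a b : R) (f : R -> R) :
  {within `[a, b], continuous f} -> (forall x, x \in `]a, b[ -> f x != x) ->
  (forall x, x \in `]a, b[ -> x < f x) \/ (forall x, x \in `]a, b[ -> f x < x).
Proof.
move=> fc nf.
case: (pselect (forall x, x \in `]a, b[ -> x < f x)) => [h|h]; [by left|right].
move=> y yI; rewrite ltNge; apply/negP => hy.
have hy' : y < f y by rewrite lt_neqAle hy andbT eq_sym; exact: nf.
apply: h => x xI; rewrite ltNge; apply/negP => hx.
have hx' : f x < x by rewrite lt_neqAle hx andbT; exact: nf.
case: (leP x y) => xy.
  apply: (no_fix_between fc nf xI yI xy).
  by rewrite ge_min le_max; apply/andP; split; apply/orP; [left|right]; lra.
apply: (no_fix_between fc nf yI xI (ltW xy)).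
by rewrite ge_min le_max; apply/andP; split; apply/orP; [right|left]; lra.
Qed.

Lemma iterN (R : realType) (f : R -> R) k x :
  iter k (fun z => - f (- z)) x = - iter k f (- x).
Proof. by elim: k => [|k IH] /=; rewrite ?opprK // IH opprK. Qed.

Lemma dnN (R : realType) (f : R -> R) n x y :
  dn (fun z => - f (- z)) n x y = dn f n (- x) (- y).
Proof.
rewrite /dn; apply: eq_bigr => k _; rewrite !iterN.
by rewrite (_ : forall u v : R, - u - - v = - (u - v)) ?normrN // => u v; lra.
Qed.

Lemma memN (R : realType) (a b x : R) : (x \in `[- b, - a]) = (- x \in `[a, b]).
Proof. by rewrite !in_itv /= lerNr andbC lerNl. Qed.

Lemma coversN (R : realType) (f : R -> R) a b n eps m :
  covers f a b n eps m -> covers (fun z => - f (- z)) (- b) (- a) n eps m.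
Proof.
move=> [s [sz [sI scov]]]; exists (map (fun x => - x) s); split; first by rewrite size_map.
split.
  by apply/allP => _ /mapP[x xs ->]; rewrite memN opprK; apply: (allP sI).
move=> y yI; rewrite memN in yI.
have /hasP[x xs hx] := scov _ yI.
apply/hasP; exists (- x); first exact: map_f.
by rewrite dnN opprK.
Qed.

Lemma hpolN (R : realType) (f : R -> R) a b :
  hpol_eps (fun z => - f (- z)) (- b) (- a) = hpol_eps f a b.
Proof.
apply/funext => eps; rewrite /hpol_eps; congr limn_esup; apply/funext => n.
congr (EFin (ln _ / _)); rewrite /Gn; congr inf.
apply/seteqP; split => _ [m cm <-]; exists m => //.
  have := coversN cm; rewrite !opprK.
  by rewrite (_ : (fun z => - - f (- - z)) = f) // ; apply/funext => z; rewrite !opprK.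
exact: coversN.
Qed.


Unset Implicit Arguments. Set Strict Implicit.

Theorem lemma3p2 (R : realType) (a b : R) (f : R -> R) :
  a < b ->
  (forall x, x \in `[a, b] -> f x \in `[a, b]) ->
  {within `[a, b], continuous f} ->
  {in `[a, b] &, {homo f : x y / x < y}} ->
  f a = a -> f b = b ->
  (forall x, x \in `]a, b[ -> f x != x) ->
  hpol_eps f a b eps @[eps --> 0^'+] --> (1%:E : \bar R).
Proof.
move=> ab H fc Hm fa fb nf.
have Hs : forall y, y \in `[a, b] -> exists2 x, x \in `[a, b] & f x = y.
  move=> y yI; have [y1 y2] := in_ab yI.
  apply: IVT => //; first exact: ltW.
  by rewrite fa fb ge_min le_max y1 y2 orbT.
have inter : forall x, x \in `[a, b] -> [\/ x = a, x = b | x \in `]a, b[].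
  move=> x; rewrite !in_itv /= => /andP[h1 h2].
  case: (ltgtP x a) => xa; [lra| |by apply: Or31].
  case: (ltgtP x b) => xb; [|lra|by apply: Or32].
  by apply: Or33.
case: (sign_const fc nf) => [inc|dec].
  apply: (@core_inc R a b f) => //.
  - move=> x xI; case: (inter x xI) => [->|->|xI']; rewrite ?fa ?fb //.
    exact/ltW/inc.
  - move=> p q ap qb; apply: pos_min.
      by apply: cont_sub fc _ _; apply: ltW.
    move=> x; rewrite in_itv /= => /andP[h1 h2]; rewrite subr_gt0; apply: inc.
    by rewrite in_itv /=; apply/andP; split; lra.
rewrite -hpolN.
apply: (@core_inc R (- b) (- a) (fun z => - f (- z))).
- by rewrite ltrN2.
- by move=> x; rewrite !memN opprK; apply: H.
- move=> x y; rewrite !memN => xI yI xy; rewrite ltrN2; apply: Hm => //.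
  by rewrite ltrN2.
- by rewrite opprK fb.
- move=> x; rewrite memN => xI; rewrite lerNr.
  case: (inter _ xI) => [->|->|xI']; rewrite ?fa ?fb //.
  exact/ltW/dec.
- move=> y; rewrite memN => yI; have [x xI fx] := Hs _ yI.
  by exists (- x); rewrite ?memN opprK // fx opprK.
- move=> p q bp qa.
  have [d d0 hd] : exists2 d, 0 < d & forall y, y \in `[- q, - p] -> d <= y - f y.
    apply: (@pos_min R (fun y => y - f y)).
      have aq : a <= - q by lra.
      have pb : - p <= b by lra.
      exact: (cont_sub2 fc aq pb).
    move=> y; rewrite in_itv /= => /andP[h1 h2]; rewrite subr_gt0; apply: dec.
    by rewrite in_itv /=; apply/andP; split; lra.
  exists d => // x; rewrite in_itv /= => /andP[h1 h2].
  have := hd (- x); rewrite in_itv /= !lerN2 h1 h2 => /(_ isT); lra.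
Qed.
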